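(* Let $0<\alpha<1/2$. For every real $2\times 2$ matrix $M$ we have $\sigma_2(D_1M)=\sigma_2(D_2M)$. Moreover $\sigma_2(D_1D_2D_2)=\sigma_2(D_2D_2D_2)>1$, and more generally $\sigma_2(D_1D_2^m)\ge\sigma_2(D_2^3)>1$ for every $m=2+3k$ with $k\ge 1$ an integer.
   Context: For $0<\alpha<1$ let $D_1=\begin{pmatrix}0&1\\ 2(1-\alpha)&2\alpha\end{pmatrix}$ and $D_2=\begin{pmatrix}0&1\\ -2(1-\alpha)&-2\alpha\end{pmatrix}$ (these are the derivative matrices of $(x,y)\mapsto(y,\tau(\alpha y+(1-\alpha)x))$, $\tau$ the symmetric tent map, on the regions $\alpha y+(1-\alpha)x<1/2$ and $>1/2$ respectively). For a real $2\times2$ matrix $B$, $\sigma_2(B)$ denotes its smaller singular value, i.e. the square root of the smaller eigenvalue of $B^TB$. *)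

(* Defs.v *)
From HB Require Import structures.
From mathcomp Require Import all_boot all_order all_algebra.
Set Implicit Arguments. Unset Strict Implicit. Unset Printing Implicit Defensive.
Import Order.TTheory GRing.Theory Num.Theory.
Local Open Scope ring_scope.

Definition D1 (R : rcfType) (a : R) : 'M[R]_2 :=
  \matrix_(i < 2, j < 2)
    if (i == 0 :> nat) then (if (j == 0 :> nat) then 0 else 1)
    else (if (j == 0 :> nat) then 2 * (1 - a) else 2 * a).

Definition D2 (R : rcfType) (a : R) : 'M[R]_2 :=
  \matrix_(i < 2, j < 2)
    if (i == 0 :> nat) then (if (j == 0 :> nat) then 0 else 1)
    else (if (j == 0 :> nat) then - (2 * (1 - a)) else - (2 * a)).

(* Smaller eigenvalue of a 2x2 (symmetric) matrix S: the smaller root of its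
   characteristic polynomial X^2 - tr(S) X + det(S). *)
Definition lambda_min (R : rcfType) (S : 'M[R]_2) : R :=
  (\tr S - Num.sqrt (\tr S ^+ 2 - 4 * \det S)) / 2.

Definition sigma2 (R : rcfType) (B : 'M[R]_2) : R :=
  Num.sqrt (lambda_min (B^T *m B)).

(* Main.v *)
Require Import Defs.
From HB Require Import structures.
From mathcomp Require Import all_boot all_order all_algebra.
From mathcomp Require Import ring lra zify.
Import Order.TTheory GRing.Theory Num.Theory.
Set Implicit Arguments.
Local Open Scope ring_scope.

Lemma sum2 (R : rcfType) (F : 'I_2 -> R) : \sum_(i < 2) F i = F 0 + F 1.
Proof. rewrite big_ord_recl big_ord_recl big_ord0 addr0.
by congr (F _ + F _); apply: val_inj. Qed.

Lemma det22 (R : rcfType) (A : 'M[R]_2) : \det A = A 0 0 * A 1 1 - A 0 1 * A 1 0.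
Proof.
rewrite (expand_det_row _ 0) sum2 /cofactor !det_mx11 !mxE /=.
have -> : lift (0 : 'I_2) 0 = 1 by apply: val_inj.
have -> : lift (1 : 'I_2) 0 = 0 by apply: val_inj.
rewrite /= expr0 expr1; ring.
Qed.

Lemma tr22 (R : rcfType) (A : 'M[R]_2) : \tr A = A 0 0 + A 1 1.
Proof. by rewrite /mxtrace sum2. Qed.

Definition Qf (R : rcfType) (B : 'M[R]_2) (x y : R) :=
  (B 0 0 * x + B 0 1 * y) ^+ 2 + (B 1 0 * x + B 1 1 * y) ^+ 2.

Definition lam (R : rcfType) (p q r : R) :=
  (p + r - Num.sqrt ((p + r) ^+ 2 - 4 * (p * r - q * q))) / 2.

Arguments lam {R}.
Arguments Qf {R}.
Lemma lamE (R : rcfType) (B : 'M[R]_2) :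
  lambda_min (B^T *m B) =
  lam (B 0 0 ^+ 2 + B 1 0 ^+ 2) (B 0 0 * B 0 1 + B 1 0 * B 1 1) (B 0 1 ^+ 2 + B 1 1 ^+ 2).
Proof.
rewrite /lambda_min /lam det22 tr22 !mxE !sum2 !mxE.
congr ((_ - Num.sqrt _) / 2); ring.
Qed.

Lemma QfE (R : rcfType) (B : 'M[R]_2) x y :
  Qf B x y = (B 0 0 ^+ 2 + B 1 0 ^+ 2) * x ^+ 2
   + 2 * (B 0 0 * B 0 1 + B 1 0 * B 1 1) * x * y + (B 0 1 ^+ 2 + B 1 1 ^+ 2) * y ^+ 2.
Proof. rewrite /Qf; ring. Qed.

Lemma lam_lb (R : rcfType) (p q r x y : R) :
  0 <= (p - r) ^+ 2 + 4 * (q * q) ->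
  lam p q r * (x ^+ 2 + y ^+ 2) <= p * x ^+ 2 + 2 * q * x * y + r * y ^+ 2.
Proof.
move=> HD.
have HD' : (p + r) ^+ 2 - 4 * (p * r - q * q) = (p - r) ^+ 2 + 4 * (q * q) by ring.
rewrite /lam HD'.
set s := Num.sqrt _.
have s0 : 0 <= s by apply: sqrtr_ge0.
have s2 : s ^+ 2 = (p - r) ^+ 2 + 4 * (q * q) by rewrite sqr_sqrtr.
set l := (p + r - s) / 2.
have hl : l = (p + r - s) / 2 by [].
have Hal : 0 <= p - l by rewrite hl; nra.
have Hgl : 0 <= r - l by rewrite hl; nra.
have Hdet : (p - l) * (r - l) = q * q by rewrite hl; nra.
suff : 0 <= (p - l) * x ^+ 2 + 2 * q * x * y + (r - l) * y ^+ 2 by nra.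
have [Ha0|Hapos] := eqVneq (p - l) 0.
  have q0 : q = 0 by nra.
  rewrite Ha0 q0; nra.
have Hap : 0 < p - l by rewrite lt_neqAle eq_sym Hapos Hal.
have : 0 <= (p - l) * ((p - l) * x ^+ 2 + 2 * q * x * y + (r - l) * y ^+ 2).
  have -> : (p - l) * ((p - l) * x ^+ 2 + 2 * q * x * y + (r - l) * y ^+ 2)
    = ((p - l) * x + q * y) ^+ 2 + ((p - l) * (r - l) - q * q) * y ^+ 2 by ring.
  by rewrite Hdet subrr mul0r addr0 sqr_ge0.
rewrite pmulr_rge0 //.
Qed.

Lemma lam_ge (R : rcfType) (p q r t : R) :
  (forall x y, t * (x ^+ 2 + y ^+ 2) <= p * x ^+ 2 + 2 * q * x * y + r * y ^+ 2) ->
  t <= lam p q r.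
Proof.
move=> H.
have Hp : t <= p by have := H 1 0; rewrite !expr1n !expr0n /=; lra.
have Hr : t <= r by have := H 0 1; rewrite !expr1n !expr0n /=; lra.
have Hdet : q * q <= (p - t) * (r - t).
  have [Ha0|Hapos] := eqVneq (p - t) 0.
    have q0 : q = 0.
      have := H (r - t + 1) (- q) => H2.
      have : 0 <= - (q * q) * (r - t + 2).
        have E : - (q * q) * (r - t + 2) = (p - t) * (r - t + 1) ^+ 2 + 2 * q * (r - t + 1) * (- q)
          + (r - t) * (- q) ^+ 2 by rewrite Ha0; ring.
        rewrite E. nra.
      nra.
    by rewrite Ha0 q0 !mul0r.
  have Hap : 0 < p - t by rewrite lt_neqAle eq_sym Hapos subr_ge0 Hp.
  have := H q (- (p - t)) => H2.
  have : 0 <= (p - t) * ((p - t) * (r - t) - q * q).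
    have E : (p - t) * ((p - t) * (r - t) - q * q) = (p - t) * q ^+ 2 + 2 * q * q * (- (p - t))
       + (r - t) * (- (p - t)) ^+ 2 by ring.
    rewrite E. nra.
  rewrite pmulr_rge0 // subr_ge0 //.
rewrite /lam.
have HD' : (p + r) ^+ 2 - 4 * (p * r - q * q) = (p - r) ^+ 2 + 4 * (q * q) by ring.
rewrite HD'.
have Hs : Num.sqrt ((p - r) ^+ 2 + 4 * (q * q)) <= (p - t) + (r - t).
  have h0 : 0 <= (p - t) + (r - t) by lra.
  rewrite -(ger0_norm h0) -sqrtr_sqr ler_sqrt ?sqr_ge0 //.
  nra.
lra.
Qed.

Lemma lam_gt1 (R : rcfType) (p q r : R) :
  1 < p -> q * q < (p - 1) * (r - 1) -> 1 < lam p q r.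
Proof.
move=> Hp Hd.
have Hr : 1 < r by nra.
rewrite /lam.
have HD' : (p + r) ^+ 2 - 4 * (p * r - q * q) = (p - r) ^+ 2 + 4 * (q * q) by ring.
rewrite HD'.
have Hs : Num.sqrt ((p - r) ^+ 2 + 4 * (q * q)) < (p - 1) + (r - 1).
  have h0 : 0 < (p - 1) + (r - 1) by lra.
  rewrite -(gtr0_norm h0) -sqrtr_sqr ltr_sqrt ?exprn_gt0 //.
  rewrite -subr_gt0.
  have -> : ((p - 1) + (r - 1)) ^+ 2 - ((p - r) ^+ 2 + 4 * (q * q)) = 4 * ((p - 1) * (r - 1) - q * q) by ring.
  by apply: mulr_gt0 => //; rewrite subr_gt0.
lra.
Qed.

Lemma HDpos (R : rcfType) (p q r : R) : 0 <= (p - r) ^+ 2 + 4 * (q * q).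
Proof. by apply: addr_ge0; [apply: sqr_ge0 | apply: mulr_ge0 => //; rewrite -expr2; apply: sqr_ge0]. Qed.

Lemma lam_B_ge0 (R : rcfType) (B : 'M[R]_2) :
  0 <= lam (B 0 0 ^+ 2 + B 1 0 ^+ 2) (B 0 0 * B 0 1 + B 1 0 * B 1 1) (B 0 1 ^+ 2 + B 1 1 ^+ 2).
Proof.
apply: lam_ge => x y; rewrite mul0r -QfE /Qf; exact: addr_ge0 (sqr_ge0 _) (sqr_ge0 _).
Qed.

Arguments lam_lb {R}.
Lemma sig_lb (R : rcfType) (B : 'M[R]_2) x y :
  sigma2 B ^+ 2 * (x ^+ 2 + y ^+ 2) <= Qf B x y.
Proof.
rewrite /sigma2 lamE sqr_sqrtr ?lam_B_ge0 // QfE.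
apply: lam_lb; exact: HDpos.
Qed.

Lemma sig_ge (R : rcfType) (B : 'M[R]_2) t :
  (forall x y, t * (x ^+ 2 + y ^+ 2) <= Qf B x y) -> Num.sqrt t <= sigma2 B.
Proof.
move=> H; rewrite /sigma2 lamE ler_sqrt ?lam_B_ge0 //.
apply: lam_ge => x y; rewrite -QfE; exact: H.
Qed.

Lemma Qf_mul (R : rcfType) (A B : 'M[R]_2) x y :
  Qf (A *m B) x y = Qf A (B 0 0 * x + B 0 1 * y) (B 1 0 * x + B 1 1 * y).
Proof. rewrite /Qf !mxE !sum2; ring. Qed.

Arguments sig_lb {R}.
Lemma sig_mul (R : rcfType) (A B : 'M[R]_2) :
  sigma2 A * sigma2 B <= sigma2 (A *m B).
Proof.
have hA : 0 <= sigma2 A by apply: sqrtr_ge0.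
have hB : 0 <= sigma2 B by apply: sqrtr_ge0.
have -> : sigma2 A * sigma2 B = Num.sqrt ((sigma2 A * sigma2 B) ^+ 2).
  by rewrite sqrtr_sqr ger0_norm // mulr_ge0.
apply: sig_ge => x y.
rewrite Qf_mul.
have h1 := sig_lb A (B 0 0 * x + B 0 1 * y) (B 1 0 * x + B 1 1 * y).
have h2 := sig_lb B x y.
rewrite /Qf in h2.
have hA2 : 0 <= sigma2 A ^+ 2 by apply: sqr_ge0.
apply: le_trans h1.
rewrite exprMn -mulrA ler_wpM2l //.
Qed.

Arguments sig_mul {R}.
Lemma sig_pow (R : rcfType) (C : 'M[R]_2) n :
  1 <= sigma2 C -> sigma2 C <= sigma2 (C ^+ n.+1).
Proof.
move=> H1; elim: n => [|n IH]; first by rewrite expr1.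
rewrite exprSr -mulmxE.
have hm := sig_mul (C ^+ n.+1) C.
have h0 : 0 <= sigma2 C by apply: sqrtr_ge0.
nra.
Qed.

Definition J (R : rcfType) : 'M[R]_2 :=
  \matrix_(i < 2, j < 2) if (i == j) then (if (i == 0 :> nat) then 1 else -1) else 0.

Lemma D2J (R : rcfType) (a : R) : D2 a = J R *m D1 a.
Proof.
apply/matrixP => i j; rewrite !mxE sum2 !mxE.
by case: i => [[|[|i]] Hi] //; case: j => [[|[|j]] Hj] //=; ring.
Qed.

Lemma JJ (R : rcfType) : (J R)^T *m J R = 1%:M.
Proof.
apply/matrixP => i j; rewrite !mxE sum2 !mxE.
by case: i => [[|[|i]] Hi] //; case: j => [[|[|j]] Hj] //=; ring.
Qed.

Lemma part1 (R : rcfType) (a : R) (M : 'M[R]_2) : sigma2 (D1 a *m M) = sigma2 (D2 a *m M).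
Proof.
rewrite /sigma2 D2J -mulmxA.
set X := D1 a *m M.
have -> : (J R *m X)^T *m (J R *m X) = X^T *m X.
  by rewrite trmx_mul -mulmxA (mulmxA (J R)^T) JJ mul1mx.
by [].
Qed.

Lemma part3 (R : rcfType) (a : R) (ha0 : 0 < a) (ha1 : a < 1 / 2) :
  1 < sigma2 (D2 a *m D2 a *m D2 a).
Proof.
rewrite /sigma2.
suff H : 1 < lambda_min ((D2 a *m D2 a *m D2 a)^T *m (D2 a *m D2 a *m D2 a)).
  by rewrite -sqrtr1 ltr_sqrt // (lt_trans ltr01 H).
rewrite lamE.
set B := D2 a *m D2 a *m D2 a.
set b := 2 * a. set c := 2 * (1 - a).
have E00 : B 0 0 = b * c.
  by rewrite /B !(mxE, sum2) /= /b /c; ring.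
have E01 : B 0 1 = b ^+ 2 - c by rewrite /B !(mxE, sum2) /= /b /c; ring.
have E10 : B 1 0 = - (c * (b ^+ 2 - c)) by rewrite /B !(mxE, sum2) /= /b /c; ring.
have E11 : B 1 1 = 2 * b * c - b ^+ 3 by rewrite /B !(mxE, sum2) /= /b /c; ring.
rewrite E00 E01 E10 E11.
set u := 1 - 2 * a.
have hu0 : 0 < u by rewrite /u; lra.
have hu1 : u < 1 by rewrite /u; lra.
have hb : b = 1 - u by rewrite /u /b; ring.
have hc : c = 1 + u by rewrite /u /c; ring.
rewrite hb hc.
apply: lam_gt1.
  rewrite -subr_gt0.
  have -> : ((1 - u) * (1 + u)) ^+ 2 + (- ((1 + u) * ((1 - u) ^+ 2 - (1 + u)))) ^+ 2 - 1
    = u ^+ 2 * (7 + 12 * u - u ^+ 2 - 4 * u ^+ 3 + u ^+ 4) by ring.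
  apply: mulr_gt0; first by apply: exprn_gt0.
  have : 0 < u ^+ 2 by apply: exprn_gt0.
  have : 0 < u ^+ 3 by apply: exprn_gt0.
  have : 0 < u ^+ 4 by apply: exprn_gt0.
  have : u ^+ 2 < 1 by rewrite expr_lt1 //; apply: ltW.
  have : u ^+ 3 < 1 by rewrite expr_lt1 //; apply: ltW.
  lra.
rewrite -subr_gt0.
match goal with |- is_true (0 < ?X) => have -> : X = u ^+ 3 * (42 - 16 * u + 20 * u ^+ 2 - u ^+ 3) by ring end.
apply: mulr_gt0; first by apply: exprn_gt0.
have : 0 < u ^+ 2 by apply: exprn_gt0.
have : u ^+ 3 < 1 by rewrite expr_lt1 //; apply: ltW.
lra.
Qed.

Unset Implicit Arguments.

Theorem proposition6 (R : rcfType) (a : R) (ha0 : 0 < a) (ha1 : a < 1 / 2) :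
  (forall M : 'M[R]_2, sigma2 (D1 a *m M) = sigma2 (D2 a *m M)) /\
  sigma2 (D1 a *m D2 a *m D2 a) = sigma2 (D2 a *m D2 a *m D2 a) /\
  1 < sigma2 (D2 a *m D2 a *m D2 a) /\
  (forall k : nat, (1 <= k)%N ->
     sigma2 (D2 a *m D2 a *m D2 a) <= sigma2 (D1 a *m D2 a ^+ (2 + 3 * k)) /\
     1 < sigma2 (D2 a *m D2 a *m D2 a)).
Proof.
have P3 := @part3 _ _ ha0 ha1.
split; first exact: part1.
split; first by rewrite -!mulmxA part1.
split; first exact: P3.
move=> k _; split => //.
have HC : D2 a *m D2 a *m D2 a = D2 a ^+ 3 by rewrite !mulmxE -expr2 -exprSr.
rewrite part1 HC mulmxE -exprS.
have -> : ((2 + 3 * k).+1 = 3 * k.+1)%N by rewrite mulnS; lia.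
rewrite exprM; apply: sig_pow.
by rewrite -HC; apply: ltW.
Qed.
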